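(* Let $A\in\mathbb{R}^{m\times n}$ have nonzero rows $a_1^T,\dots,a_m^T$, let $b\in\mathcal{R}(A)$ and $\lambda>0$, and let $\hat x$ be the unique solution of \[ \min_{x\in\mathbb{R}^n}\ \lambda\|x\|_1+\tfrac12\|x\|_2^2\quad\text{subject to}\quad Ax=b . \] Let $p_1,\dots,p_m>0$ with $\sum_i p_i=1$. Then both the Randomized Sparse Kaczmarz method (RSK) and the Exact-Step Randomized Sparse Kaczmarz method (ERSK) described in the context converge in expectation to $\hat x$ at a linear rate: for each of the two methods there exist $q\in(0,1)$ and $c>0$ such that \[ \mathbb{E}\left[\|x_k-\hat x\|_2\right]\le c\cdot q^{k/2}\quad\text{for all }k. \]
   Context: $S_\lambda$ is componentwise soft shrinkage: $S_\lambda(x)_j=\max\{|x_j|-\lambda,0\}\operatorname{sign}(x_j)$. Let $f(x)=\lambda\|x\|_1+\frac12\|x\|_2^2$ and $f^*(x^* )=\sup_x\langle x^*,x\rangle-f(x)$ its convex conjugate (so $\nabla f^*=S_\lambda$). Both methods start with $x_0=x_0^*=0$ and at each step $k$ choose $i_k\in\{1,\dots,m\}$ independently at random with $P(i_k=i)=p_i$. RSK: $x_{k+1}^*=x_k^*-\frac{\langle a_{i_k},x_k\rangle-b_{i_k}}{\|a_{i_k}\|_2^2}\,a_{i_k}$, $x_{k+1}=S_\lambda(x_{k+1}^* )$. ERSK: let $t_k$ be a minimizer of $t\mapsto f^*(x_k^*-t\,a_{i_k})+t\,b_{i_k}$ over $t\in\mathbb{R}$, and set $x_{k+1}^*=x_k^*-t_ka_{i_k}$,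 $x_{k+1}=S_\lambda(x_{k+1}^* )$. Expectations are over the random indices. *)

(* Defs.v *)
From HB Require Import structures.
From mathcomp Require Import all_boot all_order all_algebra.
From mathcomp Require Import boolp classical_sets reals.
Set Implicit Arguments. Unset Strict Implicit. Unset Printing Implicit Defensive.
Import Order.TTheory GRing.Theory Num.Theory.
Local Open Scope ring_scope.
Local Open Scope classical_set_scope.

Section Defs.
Variables (R : realType) (m n : nat).

Definition dotv (u v : 'cV[R]_n) : R := \sum_(j < n) u j 0 * v j 0.
Definition norm2 (u : 'cV[R]_n) : R := Num.sqrt (dotv u u).
Definition norm1 (u : 'cV[R]_n) : R := \sum_(j < n) `|u j 0|.

Definition soft (lam : R) (z : 'cV[R]_n) : 'cV[R]_n :=
  \col_j (Num.sg (z j 0) * Num.max (`|z j 0| - lam) 0).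

Definition fobj (lam : R) (x : 'cV[R]_n) : R :=
  lam * norm1 x + 2^-1 * (norm2 x) ^+ 2.

Definition fconj (lam : R) (y : 'cV[R]_n) : R :=
  sup (range (fun x : 'cV[R]_n => dotv y x - fobj lam x)).

Definition arow (A : 'M[R]_(m, n)) (i : 'I_m) : 'cV[R]_n := (row i A)^T.

(* RSK: dual iterate x*_k after index sequence [:: i_0; ...; i_{k-1}] *)
Definition rsk_dual (lam : R) (A : 'M[R]_(m, n)) (b : 'cV[R]_m)
    (s : seq 'I_m) : 'cV[R]_n :=
  foldl (fun z i =>
     z - ((dotv (arow A i) (soft lam z) - b i 0) / dotv (arow A i) (arow A i))
           *: arow A i) 0 s.

Definition rsk_iter lam A b s := soft lam (rsk_dual lam A b s).

(* ERSK: the step size is chosen by a rule T k z i (iteration k, current dual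
   iterate z = x*_k, chosen index i), which must return a minimizer of
   t |-> f^*(z - t a_i) + t b_i. *)
Definition ersk_rule_ok (lam : R) (A : 'M[R]_(m, n)) (b : 'cV[R]_m)
    (T : nat -> 'cV[R]_n -> 'I_m -> R) : Prop :=
  forall k z i t,
    fconj lam (z - T k z i *: arow A i) + T k z i * b i 0
      <= fconj lam (z - t *: arow A i) + t * b i 0.

Definition ersk_dual (A : 'M[R]_(m, n)) (T : nat -> 'cV[R]_n -> 'I_m -> R)
    (s : seq 'I_m) : 'cV[R]_n :=
  (foldl (fun (st : nat * 'cV[R]_n) i =>
            (st.1.+1, st.2 - T st.1 st.2 i *: arow A i)) (0%N, 0) s).2.

Definition ersk_iter lam A T s := soft lam (ersk_dual A T s).

(* expectation over i.i.d. indices i_0..i_{k-1} with P(i_j = i) = p i *)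
Definition expect (p : 'I_m -> R) (k : nat) (g : seq 'I_m -> R) : R :=
  \sum_(s : k.-tuple 'I_m) (\prod_(i <- s) p i) * g s.

End Defs.

(* Main.v *)
Require Import Defs.
From HB Require Import structures.
From mathcomp Require Import all_boot all_order all_algebra.
From mathcomp Require Import boolp classical_sets reals.
From mathcomp Require Import ring lra.
Import Order.TTheory GRing.Theory Num.Theory.
Local Open Scope ring_scope.
Set Implicit Arguments. Unset Strict Implicit. Unset Printing Implicit Defensive.

Ltac renorm := (repeat match goal with
  | H : is_true (@Order.lt _ _ ?a ?b) |- _ => have := (H : a < b); clear H
  | H : is_true (@Order.le _ _ ?a ?b) |- _ => have := (H : a <= b); clear H
  end); intros.
Ltac nlra := renorm; lra.
Ltac split_abs := repeat match goal with
 | |- context [ Num.norm ?x ] => let h := fresh "ha" in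
     have [h|h] := lerP 0 x; [rewrite (ger0_norm h) | rewrite (ltr0_norm h)]
 | H : context [ Num.norm ?x ] |- _ => let h := fresh "ha" in
     have [h|h] := lerP 0 x; [rewrite (ger0_norm h) in H | rewrite (ltr0_norm h) in H]
 end.
Ltac nnra := renorm; nra.

Section Scalar.
Variables (R : realType) (lam : R).
Hypothesis hl : 0 < lam.

Definition sc (w : R) : R := Num.sg w * Num.max (`|w| - lam) 0.

Lemma scE w : sc w = if lam < w then w - lam else if w < - lam then w + lam else 0.
Proof.
rewrite /sc; case: (ltrgt0P w) => hw.
- rewrite gtr0_sg // mul1r.
  have [h1|h1] := ltrP lam w; first by rewrite max_l //; nlra.
  have [h2|h2] := ltrP w (- lam); first by exfalso; nlra.
  by rewrite max_r //; nlra.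
- rewrite ltr0_sg // mulN1r.
  have [h1|h1] := ltrP lam w; first by exfalso; nlra.
  have [h2|h2] := ltrP w (- lam); first by rewrite max_l //; nlra.
  by rewrite max_r ?oppr0 //; nlra.
- rewrite hw sgr0 mul0r.
  have [h1|h1] := ltrP lam 0; first by exfalso; nlra.
  have [h2|h2] := ltrP 0 (- lam); first by exfalso; nlra.
  by [].
Qed.

Lemma sc_cases w : (lam < w /\ sc w = w - lam) \/ (w < - lam /\ sc w = w + lam)
   \/ (- lam <= w <= lam /\ sc w = 0).
Proof.
rewrite scE; case: ifP => h1; first by left.
case: ifP => h2; first by right; left.
right; right; split => //; apply/andP; split; rewrite leNgt ?h1 ?h2 //.
Qed.

Lemma sc_S1 w : `|w - sc w| <= lam.
Proof.
case: (sc_cases w) => [[h ->]|[[h ->]|[/andP[h1 h2] ->]]].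
- rewrite opprB addrC subrK ger0_norm; nlra.
- rewrite opprD addrA subrr add0r normrN gtr0_norm //.
- rewrite subr0; split_abs; nlra.
Qed.

Lemma sc_S2 w : sc w * (w - sc w) = lam * `|sc w|.
Proof.
case: (sc_cases w) => [[h ->]|[[h ->]|[/andP[h1 h2] ->]]].
- rewrite gtr0_norm; [ring|lra].
- rewrite ltr0_norm; [ring|lra].
- by rewrite mul0r normr0 mulr0.
Qed.

Lemma sc_K1 w t : t * (w - sc w) <= lam * `|t|.
Proof.
apply: le_trans (ler_norm _) _; rewrite normrM mulrC.
by apply: ler_wpM2r => //; apply: sc_S1.
Qed.

Definition phi (t : R) : R := lam * `|t| + t ^+ 2 / 2.

Lemma sc_K2 u w : phi (sc w) - w * sc w + (u - sc w) ^+ 2 / 2 <= phi u - w * u.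
Proof.
have h1 := sc_K1 w u; have h2 := sc_S2 w; rewrite /phi.
set s := sc w in h1 h2 *.
have -> : lam * `|s| = s * (w - s) by rewrite h2.
suff : 0 <= lam * `|u| - u * (w - s) by move=> h; rewrite -subr_ge0;
  apply: le_trans h _; rewrite le_eqVlt; apply/orP; left; apply/eqP; field.
nlra.
Qed.

Lemma sc_Dbound a w :
  phi a - phi (sc w) - w * (a - sc w) <= (2^-1 + 2 * lam / `|a|) * (sc w - a) ^+ 2.
Proof.
have h2 := sc_S2 w; rewrite /phi.
have hE : lam * `|a| + a ^+ 2 / 2 - (lam * `|sc w| + sc w ^+ 2 / 2) - w * (a - sc w)
   = (lam * `|a| - a * (w - sc w)) + (sc w - a) ^+ 2 / 2.
  by rewrite -h2; field.
rewrite hE mulrDl addrC; apply: lerD; first by rewrite mulrC.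
have [a0|an0] := eqVneq a 0.
  by rewrite a0 normr0 invr0 !(mulr0, mul0r) subrr.
have pa : 0 < `|a| by rewrite normr_gt0.
rewrite -mulrA mulrAC -(ler_pM2r pa) -!mulrA mulVf ?mulr1; last by rewrite gt_eqF.
clear hE h2.
case: (sc_cases w) => [[h ->]|[[h ->]|[/andP[h3 h4] ->]]].
- have -> : w - (w - lam) = lam by ring.
  have [ha|ha] := lerP 0 a.
    rewrite ger0_norm // (mulrC a lam) subrr mul0r.
    have := mulr_ge0 (sqr_ge0 (w - lam - a)) (ltW hl); nnra.
  rewrite ltr0_norm //.
  have : a ^+ 2 <= (w - lam - a) ^+ 2 by nnra.
  nnra.
- have -> : w - (w + lam) = - lam by ring.
  have [ha|ha] := lerP 0 a.
    rewrite ger0_norm //.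
    have : a ^+ 2 <= (w + lam - a) ^+ 2 by nnra.
    nnra.
  rewrite ltr0_norm //.
  have := mulr_ge0 (sqr_ge0 (w + lam - a)) (ltW hl); nnra.
- rewrite !subr0.
  have [ha|ha] := lerP 0 a.
    rewrite ger0_norm //; nnra.
  rewrite ltr0_norm //; nnra.
Qed.

Lemma sc_NCK a c d : 0 <= d * (c - a) -> d ^+ 2 <= d * (c - a) ->
  phi (a + d) - phi a + (phi (c - d) - phi c) <= - (d * (c - a)) + d ^+ 2.
Proof.
move=> h1 h2; rewrite /phi.
have hl1 : (0 < d -> d <= c - a).
  by move=> dp'; rewrite -(ler_pM2l dp') -expr2.
have hl2 : (d < 0 -> c - a <= d).
  move=> hd; have dp' : 0 < - d by rewrite oppr_gt0.
  by rewrite -(ler_pM2l dp') !mulNr lerN2 -expr2.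
suff : `|a + d| + `|c - d| <= `|a| + `|c|.
  move=> h; rewrite -subr_ge0.
  have -> : - (d * (c - a)) + d ^+ 2 -
   (lam * `|a + d| + (a + d) ^+ 2 / 2 - (lam * `|a| + a ^+ 2 / 2) +
    (lam * `|c - d| + (c - d) ^+ 2 / 2 - (lam * `|c| + c ^+ 2 / 2)))
   = lam * (`|a| + `|c| - (`|a + d| + `|c - d|)) by field.
  by apply: mulr_ge0; [nlra | rewrite subr_ge0].
case: (ltrgt0P d) => hd.
- have := hl1 hd; clear -hd; split_abs; nlra.
- have := hl2 hd; clear -hd; split_abs; nlra.
- by rewrite hd addr0 subr0.
Qed.

End Scalar.


Section Dot.
Variables (R : realType) (n : nat).
Implicit Types u v w : 'cV[R]_n.

Lemma dotvC u v : dotv u v = dotv v u.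
Proof. by apply: eq_bigr => j _; rewrite mulrC. Qed.

Lemma dotvDl u v w : dotv (u + v) w = dotv u w + dotv v w.
Proof. by rewrite /dotv -big_split; apply: eq_bigr => j _; rewrite !mxE mulrDl. Qed.

Lemma dotvBl u v w : dotv (u - v) w = dotv u w - dotv v w.
Proof.
rewrite /dotv -sumrB; apply: eq_bigr => j _; rewrite !mxE mulrBl //.
Qed.

Lemma dotvZl (a : R) u w : dotv (a *: u) w = a * dotv u w.
Proof. rewrite /dotv mulr_sumr; apply: eq_bigr => j _; rewrite !mxE mulrA //. Qed.

Lemma dotvDr u v w : dotv w (u + v) = dotv w u + dotv w v.
Proof. by rewrite dotvC dotvDl !(dotvC w). Qed.

Lemma dotvBr u v w : dotv w (u - v) = dotv w u - dotv w v.
Proof. by rewrite dotvC dotvBl !(dotvC w). Qed.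

Lemma dotvZr (a : R) u w : dotv w (a *: u) = a * dotv w u.
Proof. by rewrite dotvC dotvZl dotvC. Qed.

Lemma dotv_ge0 u : 0 <= dotv u u.
Proof. by apply: sumr_ge0 => j _; rewrite -expr2 sqr_ge0. Qed.

Lemma dotv_sq u : dotv u u = \sum_j u j 0 ^+ 2.
Proof. by apply: eq_bigr => j _; rewrite expr2. Qed.

End Dot.

Section Vec.
Variables (R : realType) (n : nat) (lam : R).
Hypothesis hl : 0 < lam.
Implicit Types u v w x z : 'cV[R]_n.

Lemma softE z j : soft lam z j 0 = sc lam (z j 0).
Proof. by rewrite mxE. Qed.

Lemma fobjE x : fobj lam x = \sum_j phi lam (x j 0).
Proof.
rewrite /fobj /norm2 sqr_sqrtr ?dotv_ge0 // /norm1 /dotv mulr_sumr mulr_sumr -big_split.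
apply: eq_bigr => j _; rewrite /phi /=; ring.
Qed.

Definition Dv (xh z : 'cV[R]_n) : R :=
  \sum_j (phi lam (xh j 0) - phi lam (sc lam (z j 0)) - z j 0 * (xh j 0 - sc lam (z j 0))).

Lemma Dv_ge xh z : dotv (soft lam z - xh) (soft lam z - xh) / 2 <= Dv xh z.
Proof.
rewrite /dotv mulr_suml; apply: ler_sum => j _; rewrite !mxE.
fold (sc lam (z j 0)); have := sc_K2 hl (xh j 0) (z j 0); nlra.
Qed.

Lemma Dv_ge0 xh z : 0 <= Dv xh z.
Proof. apply: le_trans (Dv_ge xh z); apply: divr_ge0 => //; apply: dotv_ge0. Qed.

Lemma Dv_step xh z d :
  Dv xh (z + d) <= Dv xh z + dotv (soft lam z - xh) d + dotv d d / 2.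
Proof.
rewrite /Dv /dotv mulr_suml -!big_split; apply: ler_sum => j _; rewrite !mxE /=.
fold (sc lam (z j 0)).
have := sc_K2 hl (sc lam (z j 0 + d j 0)) (z j 0).
have := sqr_ge0 (sc lam (z j 0 + d j 0) - sc lam (z j 0) - d j 0).
nlra.
Qed.

Lemma Dv_bound xh z :
  Dv xh z <= (2^-1 + \sum_j 2 * lam / `|xh j 0|) * dotv (soft lam z - xh) (soft lam z - xh).
Proof.
rewrite /Dv /dotv mulr_sumr; apply: ler_sum => j _; rewrite !mxE.
fold (sc lam (z j 0)).
apply: le_trans (sc_Dbound hl (xh j 0) (z j 0)) _.
rewrite -expr2; apply: ler_wpM2r; first exact: sqr_ge0.
rewrite lerD2l (bigD1 j) //= lerDl; apply: sumr_ge0 => i _.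
by apply: divr_ge0 => //; apply: mulr_ge0 => //; apply: ltW.
Qed.

Lemma fconjE w : fconj lam w = dotv w (soft lam w) - fobj lam (soft lam w).
Proof.
rewrite /fconj; set g := (fun x => _).
have ub : forall x, g x <= g (soft lam w).
  move=> x; rewrite /g !fobjE /dotv -!sumrB; apply: ler_sum => j _; rewrite !mxE.
  fold (sc lam (w j 0)).
  have := sc_K2 hl (x j 0) (w j 0); have := sqr_ge0 (x j 0 - sc lam (w j 0)); nlra.
apply/eqP; rewrite eq_le; apply/andP; split.
  apply: ge_sup; first by exists (g 0), 0.
  by move=> _ [x _ <-]; apply: ub.
apply: ub_le_sup; last by exists (soft lam w).
by exists (g (soft lam w)) => _ [x _ <-]; apply: ub.
Qed.

Lemma Dv_fconj xh w : Dv xh w = fobj lam xh + fconj lam w - dotv w xh.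
Proof.
rewrite fconjE !fobjE /Dv /dotv.
rewrite -!sumrB -big_split -sumrB; apply: eq_bigr => j _; rewrite !mxE /=.
fold (sc lam (w j 0)); ring.
Qed.

End Vec.


Section Mat.
Variable R : realType.

Lemma dotv_mulmx p q (M : 'M[R]_(p, q)) (u : 'cV_p) (v : 'cV_q) :
  dotv u (M *m v) = dotv (M^T *m u) v.
Proof.
rewrite /dotv.
under eq_bigr => i _ do rewrite mxE mulr_sumr.
under [RHS]eq_bigr => j _ do rewrite mxE mulr_suml.
rewrite exchange_big /=; apply: eq_bigr => j _; apply: eq_bigr => i _.
by rewrite mxE; ring.
Qed.

Lemma sum_sq_le q (c : 'I_q -> R) : (\sum_j c j) ^+ 2 <= q%:R * \sum_j c j ^+ 2.
Proof.
set S := \sum_j c j ^+ 2.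
have h : forall j, c j * \sum_k c k <= q%:R * (c j ^+ 2 / 2) + S / 2.
  move=> j; rewrite mulr_sumr.
  have -> : q%:R * (c j ^+ 2 / 2) + S / 2 = \sum_k (c j ^+ 2 / 2 + c k ^+ 2 / 2).
    by rewrite big_split /= sumr_const card_ord mulr_natl /S mulr_suml.
  apply: ler_sum => k _; have := sqr_ge0 (c j - c k); nlra.
rewrite expr2 mulr_suml; apply: le_trans (ler_sum _ (fun j _ => h j)) _.
rewrite big_split /= sumr_const card_ord -mulr_sumr -mulr_suml.
rewrite -/S -mulr_natl; nlra.
Qed.

Lemma mx_bound p q (M : 'M[R]_(p, q)) : exists K, 0 <= K /\
  forall w : 'cV_q, dotv (M *m w) (M *m w) <= K * dotv w w.
Proof.
exists (p%:R * (q%:R * \sum_i \sum_j M i j ^+ 2)); split.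
  apply: mulr_ge0 => //; apply: mulr_ge0 => //; apply: sumr_ge0 => i _.
  by apply: sumr_ge0 => j _; apply: sqr_ge0.
move=> w; set K := q%:R * _.
have hi : forall i, (M *m w) i 0 ^+ 2 <= K * dotv w w.
  move=> i; rewrite mxE; apply: le_trans (sum_sq_le _) _.
  rewrite /K -mulrA; apply: ler_wpM2l => //.
  rewrite dotv_sq mulr_sumr; apply: ler_sum => j _.
  rewrite exprMn ler_wpM2r ?sqr_ge0 //.
  rewrite (bigD1 i) //= (bigD1 j) //= -addrA lerDl.
  apply: addr_ge0; first by apply: sumr_ge0 => k _; apply: sqr_ge0.
  by apply: sumr_ge0 => i' _; apply: sumr_ge0 => k _; apply: sqr_ge0.
rewrite dotv_sq; apply: le_trans (ler_sum _ (fun i _ => hi i)) _.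
by rewrite sumr_const card_ord -[_ *+ p]mulr_natl /K !mulrA.
Qed.

End Mat.

Section LA.
Variables (R : realType) (m n : nat) (A : 'M[R]_(m, n)).

Lemma dotv_eq0 k (w : 'cV[R]_k) : dotv w w = 0 -> w = 0.
Proof.
move=> h; apply/matrixP => i j; rewrite (ord1 j) mxE.
have hp : forall l, predT l -> 0 <= w l 0 * w l 0 by move=> l _; rewrite -expr2 sqr_ge0.
have := @psumr_eq0P _ _ predT (fun i => w i 0 * w i 0) hp h i isT.
by move/eqP; rewrite mulf_eq0 orbb => /eqP.
Qed.

Definition inV (J : {set 'I_n}) (u : 'cV[R]_n) := forall j, j \notin J -> u j 0 = 0.
Definition injOn J := forall u, inV J u -> A *m u = 0 -> u = 0.

Lemma CJ_ex J : exists c, 0 <= c /\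
  (injOn J -> forall u, inV J u -> dotv u u <= c * dotv (A *m u) (A *m u)).
Proof.
case: (pselect (injOn J)) => hJ; last by exists 0; split=> // /hJ.
pose d := \row_(j < n) (if j \in J then 1 else 0 : R).
pose E := diag_mx d.
pose G := E *m A^T *m A *m E + (1%:M - E).
have hEu : forall u, inV J u -> E *m u = u.
  move=> u hu; apply/matrixP => i k; rewrite mul_diag_mx !mxE.
  case: ifP => hi; first by rewrite mul1r.
  by rewrite (ord1 k) hu ?hi // mul0r.
have hGu : forall u, inV J u -> G *m u = E *m A^T *m (A *m u).
  move=> u hu; rewrite /G mulmxDl mulmxBl mul1mx hEu // subrr addr0.
by rewrite -!mulmxA (hEu u hu).
have Gunit : G \in unitmx.
  rewrite unitmxE unitfE -det_tr; apply/negP => /det0P [v v0 vG].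
  set c := v^T.
  have Gc : G *m c = 0 by rewrite /c -[G]trmxK -trmx_mul vG trmx0.
  have h0 : dotv c (G *m c) = 0 by rewrite Gc /dotv big1 // => j _; rewrite !mxE mulr0.
  have e1 : dotv c (G *m c) = dotv (A *m (E *m c)) (A *m (E *m c)) + dotv c (c - E *m c).
    rewrite /G mulmxDl mulmxBl mul1mx dotvDr; congr (_ + _).
    by rewrite -!mulmxA dotv_mulmx tr_diag_mx dotv_mulmx trmxK.
  have e2 : dotv c (c - E *m c) = \sum_j (1 - d 0 j) * c j 0 ^+ 2.
    by apply: eq_bigr => j _; rewrite mul_diag_mx !mxE; ring.
  have p2 : forall j, 0 <= (1 - d 0 j) * c j 0 ^+ 2.
    move=> j; apply: mulr_ge0; last exact: sqr_ge0.
    by rewrite mxE; case: ifP => _; rewrite ?subrr ?subr0 ?ler01.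
  have s0 : dotv (A *m (E *m c)) (A *m (E *m c)) = 0 /\ \sum_j (1 - d 0 j) * c j 0 ^+ 2 = 0.
    have ha := dotv_ge0 (A *m (E *m c)).
    have hb : 0 <= \sum_j (1 - d 0 j) * c j 0 ^+ 2 by apply: sumr_ge0 => j _.
    move: h0; rewrite e1 e2 => h0; split; nlra.
  case: s0 => s1 s2.
  have cV : inV J c.
    move=> j hj; have := @psumr_eq0P _ _ predT _ (fun i _ => p2 i) s2 j isT.
    rewrite mxE (negbTE hj) subr0 mul1r => /eqP; rewrite sqrf_eq0 => /eqP //.
  have Ac : A *m c = 0 by apply: dotv_eq0; rewrite -(hEu c cV).
  have c0 := hJ c cV Ac.
  by move: v0; rewrite -[v]trmxK -/c c0 trmx0 eqxx.
have [K [K0 hK]] := mx_bound (invmx G *m (E *m A^T)).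
exists K; split => // _ u hu.
have hu' : u = (invmx G *m (E *m A^T)) *m (A *m u).
  by rewrite -!mulmxA [E *m (A^T *m _)]mulmxA -(hGu u hu) (mulKmx Gunit).
by rewrite {1 2}hu'; apply: hK.
Qed.

End LA.


Section LemL.
Variables (R : realType) (m n : nat) (A : 'M[R]_(m, n)).
Implicit Types e k : 'cV[R]_n.

Definition conf k e := forall j, 0 <= k j 0 * e j 0 /\ (e j 0 = 0 -> k j 0 = 0).
Definition NCK e := forall k, A *m k = 0 -> conf k e -> k = 0.
Definition supp e := [set j | e j 0 != 0].

Lemma split_step e k : (exists j, k j 0 * e j 0 < 0) ->
  exists t, 0 < t /\ (forall j, 0 <= (e j 0 + t * k j 0) * e j 0) /\
    (exists j, e j 0 != 0 /\ e j 0 + t * k j 0 = 0).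
Proof.
case=> j0 hj0.
pose P := [pred j | k j 0 * e j 0 < 0].
pose F := fun j => - e j 0 / k j 0.
have Pj0 : P j0 by [].
case: (arg_minP F Pj0) => j1 Pj1 hmin.
have hk1 : k j1 0 != 0 by apply/negP => /eqP h; move: Pj1; rewrite /P inE h mul0r ltxx.
have he1 : e j1 0 != 0 by apply/negP => /eqP h; move: Pj1; rewrite /P inE h mulr0 ltxx.
exists (F j1); split; last split.
- have -> : F j1 = - (k j1 0 * e j1 0) / (k j1 0 ^+ 2) by rewrite /F; field.
  apply: divr_gt0; first by rewrite oppr_gt0.
  by rewrite lt_def sqrf_eq0 hk1 sqr_ge0.
- move=> j; have [hj|hj] := lerP 0 (k j 0 * e j 0).
    have := sqr_ge0 (e j 0); have : 0 <= F j1 * (k j 0 * e j 0).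
      apply: mulr_ge0 => //; rewrite /F.
      have -> : - e j1 0 / k j1 0 = - (k j1 0 * e j1 0) / (k j1 0 ^+ 2) by field.
      by apply: divr_ge0; [rewrite oppr_ge0 ltW | apply: sqr_ge0].
    nnra.
  have hjP : P j by rewrite /P inE.
  have h1 := hmin j hjP.
  have hkj : k j 0 != 0 by apply/negP => /eqP h; move: hj; rewrite h mul0r ltxx.
  have : F j * (k j 0 * e j 0) <= F j1 * (k j 0 * e j 0) by rewrite ler_wnM2r // ltW.
  have -> : F j * (k j 0 * e j 0) = - e j 0 ^+ 2 by rewrite /F; field.
  nnra.
- by exists j1; split => //; rewrite /F; field.
Qed.

Lemma supp_lt e e' : (forall j, e j 0 = 0 -> e' j 0 = 0) ->
  (exists j, e j 0 != 0 /\ e' j 0 = 0) -> (#|supp e'| < #|supp e|)%N.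
Proof.
move=> h1 [j [hj1 hj2]]; apply: proper_card; apply/properP; split.
  apply/fintype.subsetP => i; rewrite !inE; apply: contra => /eqP /h1 ->; done.
by exists j; rewrite !inE ?hj1 // hj2 eqxx.
Qed.

Lemma NCK_mono e e' : (forall j, 0 <= e' j 0 * e j 0) ->
  (forall j, e j 0 = 0 -> e' j 0 = 0) -> NCK e -> NCK e'.
Proof.
move=> h1 h2 hN k hk hc; apply: hN => // j; split; last first.
  by move=> /h2 /(proj2 (hc j)).
have [h0|hn0] := eqVneq (e' j 0) 0; first by rewrite (proj2 (hc j) h0) mul0r.
have hp := mulr_ge0 (proj1 (hc j)) (h1 j).
have hsq : 0 < e' j 0 ^+ 2 by rewrite lt_def sqrf_eq0 hn0 sqr_ge0.
have -> : k j 0 * e j 0 = (k j 0 * e' j 0 * (e' j 0 * e j 0)) / e' j 0 ^+ 2 by field.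
by apply: divr_ge0 => //; apply: ltW.
Qed.

Lemma convex_sq (t1 t2 a b : R) : 0 <= t1 -> 0 <= t2 -> 0 < t1 + t2 ->
  (t2 * a + t1 * b) / (t1 + t2) * ((t2 * a + t1 * b) / (t1 + t2)) <=
  t2 / (t1 + t2) * (a * a) + t1 / (t1 + t2) * (b * b).
Proof.
move=> h1 h2 hs.
have hd : (t2 * a + t1 * b) / (t1 + t2) * ((t2 * a + t1 * b) / (t1 + t2)) =
   (t2 * a * a + t1 * b * b) / (t1 + t2) - t1 * t2 * ((a - b) / (t1 + t2)) ^+ 2.
  by field; rewrite gt_eqF.
rewrite hd.
have : 0 <= t1 * t2 * ((a - b) / (t1 + t2)) ^+ 2.
  by apply: mulr_ge0; [apply: mulr_ge0 | apply: sqr_ge0].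
have -> : t2 / (t1 + t2) * (a * a) + t1 / (t1 + t2) * (b * b) = (t2 * a * a + t1 * b * b) / (t1 + t2).
  by field; rewrite gt_eqF.
nlra.
Qed.

Lemma LemL : exists C, 0 <= C /\ forall e, NCK e -> dotv e e <= C * dotv (A *m e) (A *m e).
Proof.
have [cf hcf] := choice (fun J => CJ_ex A J).
pose C := \sum_J cf J.
have cf0 : forall J, 0 <= cf J by move=> J; case: (hcf J).
have C0 : forall J, cf J <= C.
  by move=> J; rewrite /C (bigD1 J) //= lerDl; apply: sumr_ge0.
have pC : 0 <= C by apply: sumr_ge0.
exists C; split => //.
have dA0 : forall e, 0 <= C * dotv (A *m e) (A *m e).
  by move=> e; apply: mulr_ge0 => //; apply: dotv_ge0.
suff : forall N e, (#|supp e| <= N)%N -> NCK e -> dotv e e <= C * dotv (A *m e) (A *m e).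
  by move=> h e; apply: (h #|supp e|).
elim => [|N IH] e hN hNCK.
  have -> : e = 0.
    apply/matrixP => j i; rewrite (ord1 i) !mxE.
    move: hN; rewrite leqn0 cards_eq0 => /eqP/setP/(_ j); rewrite !inE.
    by move/negbFE/eqP.
  by rewrite [X in X <= _]/dotv big1 ?dA0 // => j _; rewrite mxE mul0r.
set J := supp e.
have eV : inV J e by move=> j; rewrite inE negbK => /eqP.
case: (pselect (injOn A J)) => hJ.
  apply: le_trans (proj2 (hcf J) hJ e eV) _.
  by apply: ler_wpM2r => //; apply: dotv_ge0.
have [k [kV [Ak k0]]] : exists k, inV J k /\ A *m k = 0 /\ k <> 0.
  apply: contrapT => hne; apply: hJ => u hu Au.
  apply: contrapT => u0; apply: hne; by exists u.
have ck : forall k', inV J k' -> forall j, e j 0 = 0 -> k' j 0 = 0.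
  by move=> k' hk' j hj; apply: hk'; rewrite inE hj eqxx.
have nc : forall k', inV J k' -> A *m k' = 0 -> k' <> 0 -> exists j, k' j 0 * e j 0 < 0.
  move=> k' hk' Ak' k'0; apply: contrapT => hne; apply: k'0; apply: hNCK => // j.
  split; last by apply: ck.
  by rewrite leNgt; apply/negP => hlt; apply: hne; exists j.
have [t1 [t1p [t1a t1b]]] := split_step (nc k kV Ak k0).
have mkV : inV J (- k) by move=> j /kV; rewrite mxE => ->; rewrite oppr0.
have mAk : A *m (- k) = 0 by rewrite mulmxN Ak oppr0.
have mk0 : - k <> 0 by move=> h; apply: k0; rewrite -[k]opprK h oppr0.
have [t2 [t2p [t2a t2b]]] := split_step (nc (- k) mkV mAk mk0).
pose e1 := e + t1 *: k.
pose e2 := e + t2 *: (- k).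
have e1E : forall j, e1 j 0 = e j 0 + t1 * k j 0 by move=> j; rewrite !mxE.
have e2E : forall j, e2 j 0 = e j 0 + t2 * (- k) j 0 by move=> j; rewrite !mxE.
have Ae1 : A *m e1 = A *m e by rewrite mulmxDr -scalemxAr Ak scaler0 addr0.
have Ae2 : A *m e2 = A *m e by rewrite mulmxDr -scalemxAr mAk scaler0 addr0.
have z1 : forall j, e j 0 = 0 -> e1 j 0 = 0 by move=> j hj; rewrite e1E hj (ck k kV j hj) mulr0 addr0.
have z2 : forall j, e j 0 = 0 -> e2 j 0 = 0 by move=> j hj; rewrite e2E hj (ck _ mkV j hj) mulr0 addr0.
have h1 : dotv e1 e1 <= C * dotv (A *m e) (A *m e).
  rewrite -Ae1; apply: IH; last by apply: (NCK_mono (e := e)) => // j; rewrite e1E.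
  rewrite -ltnS; apply: leq_trans hN; apply: supp_lt => //.
  by case: t1b => j [hj1 hj2]; exists j; rewrite e1E.
have h2 : dotv e2 e2 <= C * dotv (A *m e) (A *m e).
  rewrite -Ae2; apply: IH; last by apply: (NCK_mono (e := e)) => // j; rewrite e2E.
  rewrite -ltnS; apply: leq_trans hN; apply: supp_lt => //.
  by case: t2b => j [hj1 hj2]; exists j; rewrite e2E.
have hs : 0 < t1 + t2 by apply: addr_gt0.
have conv : dotv e e <= t2 / (t1 + t2) * dotv e1 e1 + t1 / (t1 + t2) * dotv e2 e2.
  rewrite /dotv !mulr_sumr -big_split; apply: ler_sum => j _ /=.
  have heq : e j 0 = (t2 * e1 j 0 + t1 * e2 j 0) / (t1 + t2).
    by rewrite e1E e2E mxE; field; rewrite gt_eqF.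
  by rewrite heq; apply: convex_sq => //; apply: ltW.
apply: le_trans conv _.
have -> : C * dotv (A *m e) (A *m e) = t2 / (t1 + t2) * (C * dotv (A *m e) (A *m e)) +
   t1 / (t1 + t2) * (C * dotv (A *m e) (A *m e)).
  by field; rewrite gt_eqF.
apply: lerD; apply: ler_wpM2l => //; apply: divr_ge0 => //; apply: ltW => //.
Qed.

End LemL.


Lemma small_pos (R : realType) (I : finType) (P : pred I) (g : I -> R) :
  (forall i, P i -> 0 < g i) -> exists d, 0 < d /\ forall i, P i -> d <= g i.
Proof.
move=> hg; pose S := \sum_(i | P i) (g i)^-1.
have S0 : 0 <= S by apply: sumr_ge0 => i /hg /ltW; rewrite invr_ge0.
exists (1 + S)^-1; split; first by rewrite invr_gt0; nlra.
move=> i Pi; have gi := hg i Pi.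
rewrite -(invrK (g i)) lef_pV2 ?posrE ?invr_gt0 //; last by nlra.
rewrite /S (bigD1 i) //= addrCA lerDl; apply: addr_ge0 => //.
by apply: sumr_ge0 => j /andP [/hg /ltW]; rewrite invr_ge0.
Qed.

Section Main.
Variables (R : realType) (m n : nat) (A : 'M[R]_(m, n)) (b : 'cV[R]_m) (lam : R)
  (xh : 'cV[R]_n).
Hypotheses (hl : 0 < lam) (hAx : A *m xh = b)
  (hopt : forall x, A *m x = b -> fobj lam xh <= fobj lam x).

Lemma K2v (u z : 'cV[R]_n) : fobj lam (soft lam z) - dotv z (soft lam z) <= fobj lam u - dotv z u.
Proof.
rewrite !fobjE /dotv -!sumrB; apply: ler_sum => j _; rewrite !mxE.
fold (sc lam (z j 0)).
have := sc_K2 hl (u j 0) (z j 0); have := sqr_ge0 (u j 0 - sc lam (z j 0)); nlra.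
Qed.

Definition Inv (z : 'cV[R]_n) := forall k, A *m k = 0 -> dotv z k = 0.

Lemma NCK_x z : Inv z -> NCK A (soft lam z - xh).
Proof.
move=> hz k Ak hc; apply: contrapT => k0.
set e := soft lam z - xh.
have eE : forall j, e j 0 = sc lam (z j 0) - xh j 0 by move=> j; rewrite !mxE.
have [j0 hj0] : exists j, k j 0 != 0.
  apply: contrapT => h; apply: k0; apply/matrixP => i j; rewrite (ord1 j) mxE.
  by apply: contrapT => hi; apply: h; exists i; apply/eqP.
have kpos : forall j, k j 0 != 0 -> 0 < k j 0 * e j 0.
  move=> j hj; case: (hc j) => h1 h2; rewrite lt_def h1 andbT mulf_neq0 //.
  by apply/eqP => /h2 /eqP; rewrite (negbTE hj).
pose Sk := \sum_j k j 0 * e j 0.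
pose Q := \sum_j k j 0 ^+ 2.
have Skp : 0 < Sk.
  rewrite /Sk (bigD1 j0) //=; apply: ltr_pwDl; first exact: kpos.
  by apply: sumr_ge0 => j _; case: (hc j).
have Qp : 0 < Q.
  rewrite /Q (bigD1 j0) //=; apply: ltr_pwDl; first by rewrite lt_def sqrf_eq0 hj0 sqr_ge0.
  by apply: sumr_ge0 => j _; apply: sqr_ge0.
have hg : forall j, [pred j | k j 0 != 0] j -> 0 < k j 0 * e j 0 / k j 0 ^+ 2.
  move=> j; rewrite inE => hj; apply: divr_gt0; first exact: kpos.
  by rewrite lt_def sqrf_eq0 hj sqr_ge0.
have [d [dp hd]] := small_pos hg.
pose t := Num.min d (Sk / (2 * Q)).
have tp : 0 < t by rewrite lt_min dp /=; apply: divr_gt0 => //; nlra.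
have ht1 : forall j, t * k j 0 ^+ 2 <= k j 0 * e j 0.
  move=> j; have [kj0|kj0] := eqVneq (k j 0) 0.
    by rewrite kj0 expr0n /= mulr0 mul0r.
  have := hd j kj0; have tle : t <= d by rewrite ge_min lexx.
  move=> h; have : t <= k j 0 * e j 0 / k j 0 ^+ 2 by apply: le_trans h.
  have k2 : 0 < k j 0 ^+ 2 by rewrite lt_def sqrf_eq0 kj0 sqr_ge0.
  by rewrite ler_pdivlMr.
have ht2 : t <= Sk / (2 * Q) by rewrite ge_min lexx orbT.
have f1 : fobj lam xh <= fobj lam (xh + t *: k).
  by apply: hopt; rewrite mulmxDr -scalemxAr Ak scaler0 addr0.
have f2 : fobj lam (soft lam z) <= fobj lam (soft lam z - t *: k).
  have := K2v (soft lam z - t *: k) z.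
  rewrite dotvBr dotvZr (hz k Ak) mulr0 subr0; nlra.
have sum_le : fobj lam (xh + t *: k) - fobj lam xh +
    (fobj lam (soft lam z - t *: k) - fobj lam (soft lam z)) <= - (t * Sk) + t ^+ 2 * Q.
  rewrite !fobjE -!sumrB -big_split /= /Sk /Q mulr_sumr mulr_sumr -sumrN -big_split /=.
  apply: ler_sum => j _; rewrite !mxE.
  fold (sc lam (z j 0)).
  have := @sc_NCK R lam hl (xh j 0) (sc lam (z j 0)) (t * k j 0).
  have ce : sc lam (z j 0) - xh j 0 = e j 0 by rewrite eE.
  rewrite ce; case: (hc j) => hc1 _.
  have a1 : 0 <= t * k j 0 * e j 0 by rewrite -mulrA mulr_ge0 // ltW.
  have a2 : (t * k j 0) ^+ 2 <= t * k j 0 * e j 0.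
    have := ler_wpM2l (ltW tp) (ht1 j); nlra.
  move=> /(_ a1 a2); rewrite exprMn mulrA; nlra.
have : - (t * Sk) + t ^+ 2 * Q < 0.
  have : t * Q <= Sk / 2.
    rewrite -(ler_pM2r Qp) in ht2; move: ht2.
    have -> : Sk / (2 * Q) * Q = Sk / 2 by field; rewrite gt_eqF.
    done.
  move=> h; have : t * (t * Q) <= t * (Sk / 2) by rewrite ler_pM2l.
  have := mulr_gt0 tp Skp; nlra.
lra.
Qed.

End Main.


Lemma dotvNr (R : realType) n (u w : 'cV[R]_n) : dotv w (- u) = - dotv w u.
Proof. by rewrite /dotv -sumrN; apply: eq_bigr => j _; rewrite !mxE mulrN. Qed.

Lemma dotvNl (R : realType) n (u w : 'cV[R]_n) : dotv (- u) w = - dotv u w.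
Proof. by rewrite /dotv -sumrN; apply: eq_bigr => j _; rewrite !mxE mulNr. Qed.

Section Main2.
Variables (R : realType) (m n : nat) (A : 'M[R]_(m, n)) (b : 'cV[R]_m) (lam : R)
  (xh : 'cV[R]_n).
Hypotheses (hl : 0 < lam) (hAx : A *m xh = b)
  (hopt : forall x, A *m x = b -> fobj lam xh <= fobj lam x).

Lemma EB : exists g, 0 <= g /\ forall z, Inv A z ->
  Dv lam xh z <= g * dotv (A *m soft lam z - b) (A *m soft lam z - b).
Proof.
have [C [C0 hC]] := LemL A.
pose C1 := 2^-1 + \sum_j 2 * lam / `|xh j 0|.
have C10 : 0 <= C1.
  apply: addr_ge0; first by rewrite invr_ge0.
  by apply: sumr_ge0 => j _; apply: divr_ge0 => //; apply: mulr_ge0 => //; apply: ltW.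
exists (C1 * C); split; first exact: mulr_ge0.
move=> z hz; apply: le_trans (Dv_bound hl xh z) _.
rewrite -mulrA; apply: ler_wpM2l => //.
have -> : A *m soft lam z - b = A *m (soft lam z - xh) by rewrite mulmxBr hAx.
by apply: hC; apply: (NCK_x hl hAx hopt).
Qed.

Lemma dot_arow (x : 'cV[R]_n) i : dotv (arow A i) x = (A *m x) i 0.
Proof. by rewrite /dotv mxE; apply: eq_bigr => j _; rewrite !mxE. Qed.

Lemma Inv_step z i t : Inv A z -> Inv A (z - t *: arow A i).
Proof.
move=> hz k Ak; rewrite dotvBl dotvZl (hz k Ak) dot_arow Ak mxE mulr0 subrr //.
Qed.

Lemma Inv0 : Inv A 0.
Proof. by move=> k _; rewrite /dotv big1 // => j _; rewrite mxE mul0r. Qed.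

Lemma na_pos i : row i A != 0 -> 0 < dotv (arow A i) (arow A i).
Proof.
move=> h; rewrite lt_def dotv_ge0 andbT; apply/eqP => /dotv_eq0 h0.
move: h; rewrite /arow in h0; rewrite -[row i A]trmxK h0 trmx0 eqxx //.
Qed.

Definition resid z i := dotv (arow A i) (soft lam z) - b i 0.

Lemma rsk_desc z i : row i A != 0 ->
  Dv lam xh (z - (resid z i / dotv (arow A i) (arow A i)) *: arow A i)
  <= Dv lam xh z - resid z i ^+ 2 / (2 * dotv (arow A i) (arow A i)).
Proof.
move=> hi; have np := na_pos hi.
set a := arow A i; set na := dotv a a; set r := resid z i; set t := r / na.
have := Dv_step hl xh z (- (t *: a)).
have -> : dotv (soft lam z - xh) (- (t *: a)) = - (t * r).
  rewrite dotvNr dotvZr dotvBl dotvC [dotv xh a]dotvC /a !dot_arow hAx /r /resid dot_arow.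
  by rewrite /r /resid /a; ring.
have -> : dotv (- (t *: a)) (- (t *: a)) = t ^+ 2 * na.
  by rewrite dotvNr dotvNl opprK dotvZr dotvZl /na; ring.
have -> : - (t * r) = - (r ^+ 2 / na) by rewrite /t; field; rewrite gt_eqF.
have -> : t ^+ 2 * na / 2 = r ^+ 2 / (2 * na) by rewrite /t; field; rewrite gt_eqF.
have -> : r ^+ 2 / na = 2 * (r ^+ 2 / (2 * na)) by field; rewrite gt_eqF.
nlra.
Qed.

Lemma ersk_desc z i (T t : R) :
  fconj lam (z - T *: arow A i) + T * b i 0 <= fconj lam (z - t *: arow A i) + t * b i 0 ->
  Dv lam xh (z - T *: arow A i) <= Dv lam xh (z - t *: arow A i).
Proof.
move=> h; rewrite !(Dv_fconj hl) !dotvBl !dotvZl dotvC dot_arow hAx.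
nlra.
Qed.

End Main2.


Section Main3.
Variables (R : realType) (m n : nat) (A : 'M[R]_(m, n)) (b : 'cV[R]_m) (lam : R)
  (xh : 'cV[R]_n) (p : 'I_m -> R).
Hypotheses (hrow : forall i, row i A != 0) (hl : 0 < lam) (hAx : A *m xh = b)
  (hopt : forall x, A *m x = b -> fobj lam xh <= fobj lam x)
  (hp : forall i, 0 < p i) (hsum : \sum_(i < m) p i = 1).

Lemma q_ex : exists q, 0 < q < 1 /\ forall z (stp : 'I_m -> 'cV[R]_n), Inv A z ->
  (forall i, Dv lam xh (stp i) <= Dv lam xh z -
        resid A b lam z i ^+ 2 / (2 * dotv (arow A i) (arow A i))) ->
  \sum_i p i * Dv lam xh (stp i) <= q * Dv lam xh z.
Proof.
have [g0 [g00 hEB]] := EB hl hAx hopt.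
have hg : forall i, predT i -> 0 < p i / dotv (arow A i) (arow A i).
  by move=> i _; apply: divr_gt0 => //; apply: na_pos.
have [mu [mup hmu]] := small_pos hg.
pose g := g0 + mu.
have gp : 0 < g by rewrite /g; nlra.
exists (1 - mu / (2 * g)); split.
  have : mu / (2 * g) <= 2^-1.
    rewrite ler_pdivrMr; last by nlra.
    by rewrite mulrA mulVf ?mul1r /g; [nlra | rewrite pnatr_eq0].
  have : 0 < mu / (2 * g) by apply: divr_gt0 => //; nlra.
  move=> h1 h2; apply/andP; split; nlra.
move=> z stp hz hst.
set V := Dv lam xh z.
set sq := dotv (A *m soft lam z - b) (A *m soft lam z - b).
have hV : V <= g * sq.
  apply: le_trans (hEB z hz) _; apply: ler_wpM2r; first exact: dotv_ge0.
  by rewrite /g lerDl ltW.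
have hsq : sq = \sum_i resid A b lam z i ^+ 2.
  by rewrite /sq dotv_sq; apply: eq_bigr => i _; rewrite /resid dot_arow !mxE.
have h1 : \sum_i p i * Dv lam xh (stp i) <=
   \sum_i p i * (V - resid A b lam z i ^+ 2 / (2 * dotv (arow A i) (arow A i))).
  by apply: ler_sum => i _; apply: ler_wpM2l; [apply: ltW | apply: hst].
apply: le_trans h1 _.
have h2 : \sum_i p i * (V - resid A b lam z i ^+ 2 / (2 * dotv (arow A i) (arow A i)))
   <= V - mu / 2 * sq.
  have -> : V - mu / 2 * sq = \sum_i (p i * V - mu / 2 * resid A b lam z i ^+ 2).
    by rewrite sumrB -mulr_suml hsum mul1r hsq mulr_sumr.
  apply: ler_sum => i _.
  have hi := hmu i isT.
  have np := na_pos (hrow i).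
  rewrite mulrBr lerD2l lerN2.
  have -> : p i * (resid A b lam z i ^+ 2 / (2 * dotv (arow A i) (arow A i))) =
     (p i / dotv (arow A i) (arow A i)) / 2 * resid A b lam z i ^+ 2.
    by field; rewrite gt_eqF.
  apply: ler_wpM2r; first exact: sqr_ge0.
  nlra.
apply: le_trans h2 _.
have : V / g <= sq by rewrite ler_pdivrMr // mulrC.
have -> : (1 - mu / (2 * g)) * V = V - mu / 2 * (V / g) by field; rewrite gt_eqF.
move=> h; rewrite lerD2l lerN2; apply: ler_wpM2l => //.
nlra.
Qed.

End Main3.


Lemma sum_tuple_cons (R : realType) (T : finType) k (F : k.+1.-tuple T -> R) :
  \sum_(t : k.+1.-tuple T) F t = \sum_(i : T) \sum_(s : k.-tuple T) F (cons_tuple i s).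
Proof.
rewrite pair_big /=.
rewrite (reindex (fun p : T * k.-tuple T => cons_tuple p.1 p.2)) //=.
exists (fun t => (thead t, behead_tuple t)) => [[x s] _ | t _] /=.
  by congr pair; apply: val_inj.
by rewrite [RHS]tuple_eta; apply: val_inj.
Qed.

Lemma sum_tuple0 (R : realType) (T : finType) (F : 0.-tuple T -> R) :
  \sum_(t : 0.-tuple T) F t = F [tuple].
Proof. by rewrite (big_pred1 [tuple]) // => t; rewrite /= (tuple0 t); apply/esym/eqP. Qed.

Lemma jensen_sqrt (R : realType) (I : finType) (w v : I -> R) :
  (forall i, 0 <= w i) -> \sum_i w i = 1 -> (forall i, 0 <= v i) ->
  \sum_i w i * Num.sqrt (v i) <= Num.sqrt (\sum_i w i * v i).
Proof.
move=> hw hs hv; set M := \sum_i w i * v i.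
have M0 : 0 <= M by apply: sumr_ge0 => i _; apply: mulr_ge0.
have [Mz|Mp] := eqVneq M 0.
  have h := @psumr_eq0P _ _ predT (fun i => w i * v i) (fun i _ => mulr_ge0 (hw i) (hv i)) Mz.
  rewrite big1 ?sqrtr_ge0 // => i _.
  have /eqP := h i isT; rewrite mulf_eq0 => /orP [/eqP -> | /eqP ->].
    by rewrite mul0r.
  by rewrite sqrtr0 mulr0.
have Mpos : 0 < M by rewrite lt_def Mp M0.
set s := Num.sqrt M.
have sp : 0 < s by rewrite sqrtr_gt0.
have ss : s ^+ 2 = M by rewrite sqr_sqrtr.
have hi : forall i, w i * Num.sqrt (v i) <= w i * (v i + M) / (2 * s).
  move=> i; rewrite -mulrA; apply: ler_wpM2l => //.
  rewrite ler_pdivlMr; last by nlra.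
  have := sqr_ge0 (Num.sqrt (v i) - s); have := sqr_sqrtr (hv i); nlra.
apply: le_trans (ler_sum _ (fun i _ => hi i)) _.
rewrite -mulr_suml.
have -> : \sum_i w i * (v i + M) = M + M.
  by rewrite -/M; under eq_bigr do rewrite mulrDr; rewrite big_split /= -mulr_suml hs mul1r.
have -> : (M + M) / (2 * s) = s by rewrite -ss; field; rewrite gt_eqF.
done.
Qed.

Section Process.
Variables (R : realType) (m : nat) (p : 'I_m -> R).
Hypotheses (hp : forall i, 0 <= p i) (hsum : \sum_(i < m) p i = 1).
Variables (X : Type) (st : X -> 'I_m -> X) (I : X -> Prop) (V : X -> R) (q : R).
Hypotheses (q0 : 0 <= q) (hV : forall x, I x -> 0 <= V x)
  (hI : forall x i, I x -> I (st x i))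
  (hq : forall x, I x -> \sum_i p i * V (st x i) <= q * V x).

Lemma process k : forall x, I x ->
  \sum_(s : k.-tuple 'I_m) (\prod_(i <- s) p i) * Num.sqrt (V (foldl st x s))
  <= Num.sqrt q ^+ k * Num.sqrt (V x).
Proof.
elim: k => [|k IH] x hx.
  rewrite sum_tuple0 /= big_nil mul1r.
  exact: lexx.
rewrite sum_tuple_cons.
have h1 : forall i, \sum_(s : k.-tuple 'I_m) (\prod_(j <- cons_tuple i s) p j) *
     Num.sqrt (V (foldl st x (cons_tuple i s)))
   = p i * \sum_(s : k.-tuple 'I_m) (\prod_(j <- s) p j) * Num.sqrt (V (foldl st (st x i) s)).
  move=> i; rewrite mulr_sumr; apply: eq_bigr => s _ /=.
  by rewrite big_cons mulrA.
under eq_bigr do rewrite h1.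
have h2 : forall i, p i * \sum_(s : k.-tuple 'I_m) (\prod_(j <- s) p j) *
     Num.sqrt (V (foldl st (st x i) s)) <= p i * (Num.sqrt q ^+ k * Num.sqrt (V (st x i))).
  by move=> i; apply: ler_wpM2l => //; apply: IH; apply: hI.
apply: le_trans (ler_sum _ (fun i _ => h2 i)) _.
under eq_bigr do rewrite mulrCA.
rewrite -mulr_sumr exprSr -mulrA; apply: ler_wpM2l; first by apply: exprn_ge0; apply: sqrtr_ge0.
apply: le_trans (jensen_sqrt hp hsum (fun i => hV (hI i hx))) _.
rewrite -sqrtrM // ler_sqrt; last by apply: mulr_ge0 => //; apply: hV.
exact: hq.
Qed.

End Process.


Lemma norm_le (R : realType) n (lam : R) (hl : 0 < lam) (xh z : 'cV[R]_n) :
  norm2 (soft lam z - xh) <= Num.sqrt 2 * Num.sqrt (Dv lam xh z).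
Proof.
rewrite /norm2 -sqrtrM // ler_sqrt; last by apply: mulr_ge0 => //; apply: Dv_ge0.
have := Dv_ge hl xh z; set d := dotv _ _; nlra.
Qed.

Lemma final_bound (R : realType) m n (p : 'I_m -> R) (lam : R) (hl : 0 < lam)
  (xh : 'cV[R]_n) (X : Type) (st : X -> 'I_m -> X) (pr : X -> 'cV[R]_n) (x0 : X) (q : R) k :
  (forall i, 0 < p i) ->
  \sum_(s : k.-tuple 'I_m) (\prod_(i <- s) p i) * Num.sqrt (Dv lam xh (pr (foldl st x0 s)))
    <= Num.sqrt q ^+ k * Num.sqrt (Dv lam xh (pr x0)) ->
  expect p k (fun s => norm2 (soft lam (pr (foldl st x0 s)) - xh))
    <= (Num.sqrt 2 * Num.sqrt (Dv lam xh (pr x0)) + 1) * Num.sqrt q ^+ k.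
Proof.
move=> hp h; rewrite /expect.
have h1 : \sum_(s : k.-tuple 'I_m) (\prod_(i <- s) p i) * norm2 (soft lam (pr (foldl st x0 s)) - xh)
   <= Num.sqrt 2 * \sum_(s : k.-tuple 'I_m) (\prod_(i <- s) p i) * Num.sqrt (Dv lam xh (pr (foldl st x0 s))).
  rewrite mulr_sumr; apply: ler_sum => s _; rewrite mulrCA; apply: ler_wpM2l.
    by apply: prodr_ge0 => i _; apply: ltW.
  exact: norm_le.
apply: le_trans h1 _.
have s2 : 0 <= Num.sqrt (2 : R) by apply: sqrtr_ge0.
have sq : 0 <= Num.sqrt q ^+ k by apply: exprn_ge0; apply: sqrtr_ge0.
have := ler_wpM2l s2 h; set a := Num.sqrt (Dv _ _ _); set Y := Num.sqrt q ^+ k.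
move=> h2; apply: le_trans h2 _.
have -> : (Num.sqrt 2 * a + 1) * Y = Num.sqrt 2 * (Y * a) + Y by ring.
by rewrite lerDl.
Qed.

Unset Implicit Arguments.

Theorem corollary5p1 (R : realType) (m n : nat) (A : 'M[R]_(m, n))
    (b : 'cV[R]_m) (lam : R) (xhat : 'cV[R]_n) (p : 'I_m -> R) :
  (forall i : 'I_m, row i A != 0) ->
  (exists x : 'cV[R]_n, A *m x = b) ->
  0 < lam ->
  A *m xhat = b ->
  (forall x : 'cV[R]_n, A *m x = b -> fobj lam xhat <= fobj lam x) ->
  (forall i, 0 < p i) ->
  \sum_(i < m) p i = 1 ->
  (exists q : R, 0 < q < 1 /\ exists c : R, 0 < c /\
     forall k : nat,
       expect p k (fun s => norm2 (rsk_iter lam A b s - xhat))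
         <= c * Num.sqrt q ^+ k)
  /\
  (forall T : nat -> 'cV[R]_n -> 'I_m -> R, ersk_rule_ok lam A b T ->
     exists q : R, 0 < q < 1 /\ exists c : R, 0 < c /\
     forall k : nat,
       expect p k (fun s => norm2 (ersk_iter lam A T s - xhat))
         <= c * Num.sqrt q ^+ k).
Proof.
move=> hrow _ hl hAx hopt hp hsum.
have [q [qb hq]] := q_ex hrow hl hAx hopt hp hsum.
have q0 : 0 <= q by case/andP: qb => /ltW.
have hp0 : forall i, 0 <= p i by move=> i; apply: ltW.
have cpos : forall v : R, 0 < Num.sqrt 2 * Num.sqrt v + 1.
  move=> v; have := mulr_ge0 (sqrtr_ge0 (2 : R)) (sqrtr_ge0 v); nlra.
split.
  exists q; split => //; exists (Num.sqrt 2 * Num.sqrt (Dv lam xhat 0) + 1); split => // k.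
  pose stR := (fun (z : 'cV[R]_n) (i : 'I_m) => z - ((dotv (arow A i) (soft lam z) - b i 0) /
                dotv (arow A i) (arow A i)) *: arow A i).
  apply: (@final_bound R m n p lam hl xhat 'cV[R]_n stR id 0 q k hp).
  apply: (@process R m p hp0 hsum _ stR (Inv A) (Dv lam xhat) q q0).
  - by move=> x _; apply: Dv_ge0.
  - by move=> x i hx; apply: Inv_step.
  - move=> x hx; apply: hq => // i; exact: rsk_desc.
  - exact: Inv0.
move=> T hT.
exists q; split => //; exists (Num.sqrt 2 * Num.sqrt (Dv lam xhat 0) + 1); split => // k.
pose stE := (fun (st : nat * 'cV[R]_n) (i : 'I_m) =>
   (st.1.+1, st.2 - T st.1 st.2 i *: arow A i)).
apply: (@final_bound R m n p lam hl xhat (nat * 'cV[R]_n) stE snd (0%N, 0) q k hp).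
apply: (@process R m p hp0 hsum _ stE (fun x => Inv A x.2) (fun x => Dv lam xhat x.2) q q0).
- by move=> x _; apply: Dv_ge0.
- by move=> x i hx; apply: Inv_step.
- move=> x hx; apply: (hq x.2 (fun i => x.2 - T x.1 x.2 i *: arow A i)) => // i.
  apply: le_trans; last exact: (rsk_desc hl hAx x.2 (hrow i)).
  apply: ersk_desc => //.
  rewrite hAx; exact: (hT x.1 x.2 i).
- exact: Inv0.
Qed.
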